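(* Let $\tau\subset\overline{\mathrm{K\ddot ah}(X)}$ be a cone and $\beta=(0,\dots,0,-1/2,\dots,-1/2)$. Then the zero locus of $\mathrm{Ind}(\tau,\beta)$ in $\mathbb{C}^J$ consists of at most one point, namely $\alpha^0=(\alpha^0_{i,j})$ with $\alpha^0_{i,0}=-1/2$ for $1\le i\le r$ and $\alpha^0_{i,j}=0$ for $j\ge1$.
   Context: $N\cong\mathbb{Z}^n$, $M$ dual. $X$ smooth projective toric with fan $\Sigma$ and nef-partition $\Sigma(1)=I_1\sqcup\cdots\sqcup I_r$ (each $E_i=\sum_{\rho\in I_i}D_\rho$ nef), $I_i=\{\rho_{i,1},\dots,\rho_{i,n_i}\}$, $J=\{(i,j):1\le i\le r,0\le j\le n_i\}$, $\nu_{i,j}=(\rho_{i,j},e_i)$ ($j\ge1$), $\nu_{i,0}=(0,e_i)$ in $N\times\mathbb{Z}^r$. $L_{\mathrm{ext}}=\ker(\mathbb{Z}^J\to N\times\mathbb{Z}^r,\ e_{i,j}\mapsto\nu_{i,j})\cong H_2(X,\mathbb{Z})$, so $H^2(X,\mathbb{R})\cong L_{\mathrm{ext}}^\vee\otimes\mathbb{R}$ contains the closed Kähler cone $\overline{\mathrm{K\ddot ah}(X)}$. For $\ell\in L_{\mathrm{ext}}$, $\ell^+$ is its positive part and $I_\ell(\alpha)=\prod_{(i,j)\in J}\prod_{k=0}^{\ell^+_{i,j}-1}(\alpha_{i,j}-k)$. The indicial ideal $\mathrm{Ind}(\tau,\beta)\subset\mathbb{C}[\alpha_{i,j}:(i,j)\in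 J]$ is generated by $I_\ell(\alpha)$ for $0\ne\ell\in\tau^\vee\cap L_{\mathrm{ext}}$ and by $\sum_{(i,j)\in J}\langle\bar m,\nu_{i,j}\rangle\alpha_{i,j}-\langle\bar m,\beta\rangle$ for $\bar m\in M\times\mathbb{Z}^r$. *)

(* Defs.v *)
From HB Require Import structures.
From mathcomp Require Import all_boot all_order all_algebra.
From mathcomp Require Import reals Rstruct complex.
From Stdlib Require Import Rdefinitions.

Set Implicit Arguments.
Unset Strict Implicit.
Unset Printing Implicit Defensive.

Import Order.TTheory GRing.Theory Num.Theory.
Local Open Scope ring_scope.

Notation RR := Rdefinitions.R.
Notation CC := (complex Rdefinitions.R).

(* Index set J = {(i,j) : 1<=i<=r, 0<=j<=n_i}, re-indexed as 'I_r + 'I_k: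
   (i,0) <-> inl i,  (i,j) with j>=1 <-> inr rho where rho = rho_{i,j} is the
   ray with p rho = i.  Here k = |Sigma(1)|, rays are indexed by 'I_k. *)
Definition Jidx (r k : nat) := ('I_r + 'I_k)%type.

Section Toric.
Variables (n k r : nat).
(* u rho = primitive generator of the ray rho, a vector in N = Z^n *)
Variable u : 'I_k -> 'I_n -> int.
(* the maximal cones of the (simplicial) fan, as sets of rays *)
Variable Sig : {set {set 'I_k}}.
(* the nef-partition: rho \in I_(p rho) *)
Variable p : 'I_k -> 'I_r.

Definition dotM (m : 'I_n -> RR) (rho : 'I_k) : RR :=
  \sum_(b < n) m b * (u rho b)%:~R.

Definition in_cone (S : {set 'I_k}) (v : 'I_n -> RR) : Prop :=
  exists c : 'I_k -> RR, (forall rho, 0 <= c rho) /\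
    (forall b, v b = \sum_(rho in S) c rho * (u rho b)%:~R).

Definition Zbasis (S : {set 'I_k}) : Prop :=
  (forall v : 'I_n -> int, exists c : 'I_k -> int,
      forall b, v b = \sum_(rho in S) c rho * u rho b) /\
  (forall c : 'I_k -> int, (forall b, \sum_(rho in S) c rho * u rho b = 0) ->
      forall rho, rho \in S -> c rho = 0).

Definition smooth_complete_fan : Prop :=
  [/\ injective u,
      (forall rho, exists2 s, s \in Sig & rho \in s),
      (forall s, s \in Sig -> Zbasis s),
      (forall s t v, s \in Sig -> t \in Sig -> in_cone s v -> in_cone t v ->
          in_cone (s :&: t) v) &
      (forall v : 'I_n -> RR, exists2 s, s \in Sig & in_cone s v)].

(* projectivity: existence of a (Cartier) divisor sum a_rho D_rho with
   strictly convex support function, i.e. an ample divisor *)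
Definition projective_fan : Prop :=
  exists a : 'I_k -> int, forall s, s \in Sig -> exists m : 'I_n -> int,
    (forall rho, rho \in s -> \sum_(b < n) m b * u rho b = - a rho) /\
    (forall rho, rho \notin s -> - a rho < \sum_(b < n) m b * u rho b).

Definition smooth_projective_fan : Prop :=
  smooth_complete_fan /\ projective_fan.

(* an R-divisor sum_rho a_rho D_rho on the complete toric variety X is nef
   iff its support function is convex:  for every maximal cone s there is
   m_s in M_R with <m_s,u_rho> = -a_rho for rho in s and
   <m_s,u_rho> >= -a_rho for all rho. *)
Definition nef_divisor (a : 'I_k -> RR) : Prop :=
  forall s, s \in Sig -> exists m : 'I_n -> RR,
    (forall rho, rho \in s -> dotM m rho = - a rho) /\
    (forall rho, - a rho <= dotM m rho).

(* nef-partition: each E_i = sum_{rho in I_i} D_rho is nef *)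
Definition nef_partition : Prop :=
  forall i : 'I_r, nef_divisor (fun rho => (p rho == i)%:R).

(* <m_bar, nu_J> for m_bar = (m, c) in M x Z^r *)
Definition pair_nu (m : 'I_n -> int) (c : 'I_r -> int) (j : Jidx r k) : int :=
  match j with
  | inl i => c i
  | inr rho => \sum_(b < n) m b * u rho b + c (p rho)
  end.

(* L_ext = ker (Z^J -> N x Z^r, e_J |-> nu_J) *)
Definition Lext (l : Jidx r k -> int) : Prop :=
  (forall b : 'I_n, \sum_(rho < k) l (inr rho) * u rho b = 0) /\
  (forall i : 'I_r, l (inl i) + \sum_(rho < k | p rho == i) l (inr rho) = 0).

(* An element x of R^J represents the element (l |-> sum_J x_J l_J) of
   L_ext^vee (x) R = H^2(X,R); under L_ext = H_2(X,Z) (l |-> (l_{inr rho})_rho)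
   it is the class of the divisor sum_rho (x_{inr rho} - x_{inl (p rho)}) D_rho.
   It lies in the closed Kaehler cone iff this class is nef. *)
Definition closed_kahler (x : Jidx r k -> RR) : Prop :=
  nef_divisor (fun rho => x (inr rho) - x (inl (p rho))).

End Toric.

(* tau is a (convex) cone in R^J (taken as the full preimage of a cone of
   L_ext^vee (x) R) *)
Definition is_cone (r k : nat) (tau : (Jidx r k -> RR) -> Prop) : Prop :=
  [/\ tau (fun _ => 0),
      (forall x y, tau x -> tau y -> tau (fun j => x j + y j)) &
      (forall (c : RR) x, 0 <= c -> tau x -> tau (fun j => c * x j))].

Definition in_dual (r k : nat) (tau : (Jidx r k -> RR) -> Prop)
  (l : Jidx r k -> int) : Prop :=
  forall x, tau x -> 0 <= \sum_(j : Jidx r k) x j * (l j)%:~R.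

Definition posp (z : int) : nat := if z is Posz m then m else 0%N.

Definition Iell (r k : nat) (l : Jidx r k -> int) (alpha : Jidx r k -> CC) : CC :=
  \prod_(j : Jidx r k) \prod_(q < posp (l j)) (alpha j - q%:R).

(* <m_bar, beta> with beta = (0,...,0,-1/2,...,-1/2) *)
Definition pair_beta (r : nat) (c : 'I_r -> int) : CC :=
  - ((\sum_(i < r) (c i)%:~R) / 2%:R).

Definition ind_zero (n k r : nat) (u : 'I_k -> 'I_n -> int) (p : 'I_k -> 'I_r)
  (tau : (Jidx r k -> RR) -> Prop) (alpha : Jidx r k -> CC) : Prop :=
  (forall l : Jidx r k -> int, Lext u p l -> (exists j, l j != 0) ->
      in_dual tau l -> Iell l alpha = 0) /\
  (forall (m : 'I_n -> int) (c : 'I_r -> int),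
      \sum_(j : Jidx r k) (pair_nu u p m c j)%:~R * alpha j - pair_beta c = 0).

Definition alpha0 (r k : nat) (j : Jidx r k) : CC :=
  match j with
  | inl _ => - (2%:R)^-1
  | inr _ => 0
  end.

(* Main.v *)
Require Import Defs.
From HB Require Import structures.
From mathcomp Require Import all_boot all_order all_algebra.
From mathcomp Require Import reals Rstruct complex.
From Stdlib Require Import ClassicalEpsilon.
Set Implicit Arguments.
Unset Strict Implicit.
Import Order.TTheory GRing.Theory Num.Theory.
Local Open Scope ring_scope.

Lemma dual_basis (n k : nat) (u : 'I_k -> 'I_n -> int) (s : {set 'I_k}) :
  Zbasis u s -> exists m : 'I_k -> 'I_n -> int,
    forall sg tau, sg \in s -> tau \in s ->
      \sum_(b < n) m sg b * u tau b = (sg == tau)%:R.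
Proof.
case=> hsp hinj.
have hc : forall b : 'I_n, { c : 'I_k -> int |
   forall b', ((b == b')%:R : int) = \sum_(rho in s) c rho * u rho b' }.
  move=> b; apply: constructive_indefinite_description.
  exact: (hsp (fun b' => (b == b')%:R)).
exists (fun sg b => sval (hc b) sg) => sg tau hsg htau.
pose c' := fun sg => \sum_(b < n) u tau b * sval (hc b) sg - (tau == sg)%:R.
have Hz : forall b', \sum_(rho in s) c' rho * u rho b' = 0.
  move=> b'.
  rewrite /c'; under eq_bigr => rho _ do rewrite mulrBl.
  rewrite sumrB.
  rewrite [X in _ - X](bigD1 tau) //= eqxx mul1r.
  rewrite [X in u tau _ + X]big1 ?addr0; last first.
    by move=> rho /andP [_]; rewrite eq_sym => /negbTE ->; rewrite mul0r.
  under eq_bigr => rho _ do rewrite mulr_suml.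
  rewrite exchange_big /=.
  under eq_bigr => b _ do (under eq_bigr => i _ do rewrite -mulrA; rewrite -mulr_sumr -(svalP (hc b) b')).
  rewrite (bigD1 b') //= eqxx mulr1 big1 ?addr0 ?subrr //.
  by move=> b /negbTE ->; rewrite mulr0.
move: (hinj c' Hz sg hsg) => /eqP; rewrite /c' subr_eq0 => /eqP H.
rewrite eq_sym -H; apply: eq_bigr => b _; by rewrite mulrC.
Qed.

Lemma nef_pos (n k : nat) (u : 'I_k -> 'I_n -> int) (Sig : {set {set 'I_k}})
  (s : {set 'I_k}) (hs : s \in Sig) (d : 'I_k -> RR) (hd : nef_divisor u Sig d)
  (l : 'I_k -> int) (hl : forall b, \sum_(rho < k) l rho * u rho b = 0)
  (hpos : forall rho, rho \notin s -> (0 <= l rho)%R) :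
  (0 : RR) <= \sum_(rho < k) d rho * (l rho)%:~R.
Proof.
have [m [hm1 hm2]] := hd s hs.
have H0 : \sum_(rho < k) dotM u m rho * (l rho)%:~R = 0.
  rewrite /dotM; under eq_bigr => rho _ do rewrite mulr_suml.
  rewrite exchange_big /= big1 // => b _.
  under eq_bigr => rho _ do rewrite -mulrA.
  rewrite -mulr_sumr.
  have -> : \sum_(rho < k) (u rho b)%:~R * (l rho)%:~R = ((\sum_(rho < k) l rho * u rho b)%:~R : RR).
    rewrite rmorph_sum; apply: eq_bigr => rho _; by rewrite rmorphM /= mulrC.
  by rewrite hl mulr0.
have -> : \sum_(rho < k) d rho * (l rho)%:~R = \sum_(rho < k) (d rho + dotM u m rho) * (l rho)%:~R.
  by under [RHS]eq_bigr => rho _ do rewrite mulrDl; rewrite big_split /= H0 addr0.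
apply: sumr_ge0 => rho _.
case: (boolP (rho \in s)) => hrs.
  by rewrite hm1 // addrN mul0r.
apply: mulr_ge0; first by move: (hm2 rho); rewrite -subr_ge0 opprK addrC.
by rewrite ler0z; apply: hpos.
Qed.

Lemma posp_le0 (z : int) : z <= 0 -> posp z = 0%N.
Proof. by case: z => [[|m]|m]. Qed.

Lemma posp_lt (z : int) (q : nat) : (q < posp z)%N -> (q%:Z < z).
Proof. by case: z => [m|m] //=; rewrite ltz_nat. Qed.

Lemma sumJ (r k : nat) (V : nmodType) (F : Jidx r k -> V) :
  \sum_(j : Jidx r k) F j = \sum_(i < r) F (inl i) + \sum_(rho < k) F (inr rho).
Proof. exact: big_sumType. Qed.

Lemma sum_inl (r k : nat) (p : 'I_k -> 'I_r) (R : comPzRingType) (f : 'I_r -> R) (g : 'I_k -> R) :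
  \sum_(i < r) f i * \sum_(rho < k | p rho == i) g rho = \sum_(rho < k) f (p rho) * g rho.
Proof.
rewrite (partition_big p predT) //=; apply: eq_bigr => i _.
rewrite mulr_sumr; apply: eq_bigr => rho /eqP ->; done.
Qed.

Lemma batyrev (n k r : nat) (u : 'I_k -> 'I_n -> int)
  (Sig : {set {set 'I_k}}) (p : 'I_k -> 'I_r)
  (hX : smooth_projective_fan u Sig) (hp : nef_partition u Sig p)
  (tau : (Jidx r k -> RR) -> Prop)
  (hK : forall x, tau x -> closed_kahler u Sig p x)
  (alpha : Jidx r k -> CC)
  (hI : forall l : Jidx r k -> int, Lext u p l -> (exists j, l j != 0) ->
      in_dual tau l -> Iell l alpha = 0)
  (P : {set 'I_k}) (hP : forall rho, rho \in P -> alpha (inr rho) != 0)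
  (hns : forall s, s \in Sig -> ~~ (P \subset s)) : False.
Proof.
have [[_ _ hZ _ hC] _] := hX.
pose w := fun b => \sum_(rho in P) u rho b.
have [s hs [c [hc0 hc]]] := hC (fun b => (w b)%:~R).
have [m hm] := dual_basis (hZ s hs).
pose e := fun sg => \sum_(b < n) m sg b * w b.
have he : forall sg, sg \in s -> (e sg)%:~R = c sg.
  move=> sg hsg; rewrite /e rmorph_sum /=.
  under eq_bigr => b _ do rewrite rmorphM /= hc mulr_sumr.
  rewrite exchange_big /=.
  transitivity (\sum_(rho in s) c rho * (((sg == rho)%:R : int)%:~R : RR)).
    apply: eq_bigr => rho hrho.
    rewrite -hm // rmorph_sum mulr_sumr; apply: eq_bigr => b _.
    by rewrite rmorphM /= mulrCA.
  rewrite (bigD1 sg) //= eqxx mulr1 big1 ?addr0 //.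
  by move=> rho /andP [_ hne]; rewrite eq_sym (negbTE hne) mulr0.
have he0 : forall sg, sg \in s -> 0 <= e sg.
  by move=> sg hsg; rewrite -(ler0z RR) he.
have hw : forall b, w b = \sum_(rho in s) e rho * u rho b.
  move=> b; apply/eqP; rewrite -(eqr_int RR) hc rmorph_sum /=; apply/eqP.
  by apply: eq_bigr => rho hrho; rewrite rmorphM /= he.
pose lr := fun rho => ((rho \in P)%:R : int) - (if rho \in s then e rho else 0).
pose L : Jidx r k -> int := fun j => match j with
   | inl i => - \sum_(rho < k | p rho == i) lr rho | inr rho => lr rho end.
have hlr : forall b, \sum_(rho < k) lr rho * u rho b = 0.
  move=> b; rewrite /lr; under eq_bigr => rho _ do rewrite mulrBl.
  rewrite sumrB; apply/eqP; rewrite subr_eq0; apply/eqP.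
  transitivity (w b).
    rewrite /w [RHS]big_mkcond; apply: eq_bigr => rho _.
    by case: (rho \in P); rewrite ?mul1r ?mul0r.
  rewrite hw [LHS]big_mkcond; apply: eq_bigr => rho _.
  by case: (rho \in s); rewrite ?mul0r.
have hpos : forall rho, rho \notin s -> 0 <= lr rho.
  by move=> rho /negbTE hrs; rewrite /lr hrs subr0; case: (rho \in P).
have hle : forall rho, lr rho <= (rho \in P)%:R.
  move=> rho; rewrite /lr; case: (boolP (rho \in s)) => hrs; last by rewrite subr0.
  by rewrite lerBlDr lerDl he0.
have hinl : forall i, 0 <= \sum_(rho < k | p rho == i) lr rho.
  move=> i; have := nef_pos hs (hp i) hlr hpos.
  rewrite -(ler0z RR) rmorph_sum /= => H; apply: (le_trans H); rewrite le_eqVlt; apply/orP; left; apply/eqP.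
  rewrite [RHS]big_mkcond; apply: eq_bigr => rho _ /=.
  by case: (p rho == i); rewrite ?mul1r ?mul0r.
have hLext : Lext u p L.
  split; first exact: hlr.
  by move=> i /=; rewrite addNr.
have hnz : exists j, L j != 0.
  have /subsetPn [rho hrP hrs] := hns s hs.
  exists (inr rho); rewrite /= /lr hrP (negbTE hrs) subr0; done.
have hdual : in_dual tau L.
  move=> x /hK hx; have := nef_pos hs hx hlr hpos.
  rewrite sumJ /=.
  under [X in _ -> _ <= X + _]eq_bigr => i _ do rewrite rmorphN /= rmorph_sum mulrN.
  rewrite sumrN sum_inl.
  under eq_bigr => rho _ do rewrite mulrBl.
  by rewrite sumrB addrC.
have := hI L hLext hnz hdual.
move/eqP/prodf_eq0 => [j _ /prodf_eq0 [q _]].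
case: j q => [i|rho] q.
  have E : posp (L (inl i)) = 0%N.
    by apply: posp_le0; rewrite /= oppr_le0.
  by move: q => [q hq]; move: hq; rewrite E.
move: q => [q hq] /=; rewrite subr_eq0 => /eqP ha.
have h1 := posp_lt hq; have h2 := hle rho.
have hrP : rho \in P.
  by apply/negPn/negP => hn; move: (lt_le_trans h1 h2); rewrite (negbTE hn).
move: (hP rho hrP); rewrite ha.
have -> : q = 0%N.
  by move: (lt_le_trans h1 h2); rewrite hrP ltz_nat ltnS leqn0 => /eqP.
by rewrite eqxx.
Qed.

Theorem mainTheorem9 (n k r : nat) (u : 'I_k -> 'I_n -> int)
  (Sig : {set {set 'I_k}}) (p : 'I_k -> 'I_r)
  (hX : smooth_projective_fan u Sig) (hp : nef_partition u Sig p)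
  (tau : (Jidx r k -> RR) -> Prop) (htau : is_cone tau)
  (hK : forall x, tau x -> closed_kahler u Sig p x)
  (alpha : Jidx r k -> CC) :
  ind_zero u p tau alpha -> forall j : Jidx r k, alpha j = alpha0 j.
Proof.
move=> [hI hL].
pose P := [set rho | alpha (inr rho) != 0].
have hP : forall rho, rho \in P -> alpha (inr rho) != 0 by move=> rho; rewrite inE.
have hinr : forall rho, alpha (inr rho) = 0.
  move=> rho; apply/eqP/negPn/negP => hr.
  have hrP : rho \in P by rewrite inE.
  case: (boolP [exists s in Sig, P \subset s]); last first.
    move=> hn; apply: (batyrev hX hp hK hI hP) => s hs.
    by apply/negP => hsub; move/negP: hn; apply; apply/existsP; exists s; rewrite hs.
  move/existsP => [s /andP [hs hsub]].
  have [[_ _ hZ _ _] _] := hX.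
  have [m hm] := dual_basis (hZ s hs).
  have hrs : rho \in s by apply: (subsetP hsub).
  have := hL (m rho) (fun _ => 0).
  have hb0 : pair_beta (fun _ : 'I_r => 0) = 0 by rewrite /pair_beta big1 ?mul0r ?oppr0.
  rewrite hb0 subr0 sumJ big1 ?add0r; last by move=> i _; rewrite /= mul0r.
  rewrite (bigD1 rho) //= [X in _ + X = _]big1.
    rewrite !addr0 hm // eqxx mul1r => /eqP; by rewrite (negbTE hr).
  move=> sg hne; case: (boolP (sg \in P)) => hsP; last first.
    by move: hsP; rewrite inE negbK => /eqP ->; rewrite mulr0.
  by rewrite addr0 hm ?(subsetP hsub) // eq_sym (negbTE hne) mul0r.
case=> [i|rho]; last by rewrite hinr.
have := hL (fun _ => 0) (fun i' => (i' == i)%:R).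
rewrite sumJ [X in _ + X - _ = _]big1; last by move=> rho _; rewrite hinr mulr0.
rewrite addr0 (bigD1 i) //= big1 ?addr0; last first.
  by move=> i' hne; rewrite (negbTE hne) mul0r.
rewrite eqxx mul1r /pair_beta (bigD1 i) //= big1 ?addr0; last first.
  by move=> i' hne; rewrite (negbTE hne).
rewrite eqxx opprK => /eqP; rewrite addr_eq0 => /eqP ->.
by rewrite /= mul1r.
Qed.
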